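(* Let $d\ge 2$ and $E,F\subset\mathbb F_q^d$. Then $$\sum_{t\in\mathbb F_q}\nu^2(t)\leq \frac{|E|^2|F|^2}{q}+q^{3d}\sum_{r\in\mathbb F_q}\Big|\sum_{m\in S_r}\overline{\widehat E(m)}\widehat F(m)\Big|^2.$$
   Context: $\mathbb F_q$ is a finite field of characteristic greater than two, and $\chi$ is a fixed nontrivial additive character of $\mathbb F_q$. For $f:\mathbb F_q^d\to\mathbb C$, $\widehat f(m)=q^{-d}\sum_{x\in\mathbb F_q^d}\chi(-m\cdot x)f(x)$; sets are identified with their indicator functions. For $m\in\mathbb F_q^d$, $\|m\|=m_1^2+\dots+m_d^2$; $S_r=\{x\in\mathbb F_q^d:\|x\|=r\}$. $\nu(t)=|\{(x,y)\in E\times F:\|x-y\|=t\}|$. *)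

(* Defs.v *)
From HB Require Import structures.
From mathcomp Require Import all_boot all_order all_algebra all_field.
Set Implicit Arguments. Unset Strict Implicit. Unset Printing Implicit Defensive.
Import Order.TTheory GRing.Theory Num.Theory.
Local Open Scope ring_scope.

Definition dotv (K : fieldType) (d : nat) (m x : 'rV[K]_d) : K :=
  \sum_(i < d) m 0 i * x 0 i.

Definition qnorm (K : fieldType) (d : nat) (m : 'rV[K]_d) : K :=
  \sum_(i < d) m 0 i ^+ 2.

Definition nontriv_add_char (K : finFieldType) (chi : K -> algC) : Prop :=
  [/\ chi 0 = 1, (forall x y, chi (x + y) = chi x * chi y) & exists x, chi x != 1].

Definition fhat (K : finFieldType) (d : nat) (chi : K -> algC)
    (E : {set 'rV[K]_d}) (m : 'rV[K]_d) : algC :=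
  (#|K|%:R ^+ d)^-1 * \sum_(x : 'rV[K]_d) chi (- dotv m x) * (x \in E)%:R.

Definition nu (K : finFieldType) (d : nat) (E F : {set 'rV[K]_d}) (t : K) : nat :=
  #|[set p : 'rV[K]_d * 'rV[K]_d | (p.1 \in E) && (p.2 \in F) && (qnorm (p.1 - p.2) == t)]|.

(* Main.v *)
Require Import Defs.
From HB Require Import structures.
From mathcomp Require Import all_boot all_order all_algebra all_field.
From mathcomp Require Import ring.
Import Order.TTheory GRing.Theory Num.Theory.
Local Open Scope ring_scope.

Section Chi.
Variables (K : finFieldType) (chi : K -> algC) (hchi : nontriv_add_char chi).

Lemma chi0 : chi 0 = 1. Proof. by case: hchi. Qed.
Lemma chiD x y : chi (x + y) = chi x * chi y. Proof. by case: hchi. Qed.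
Lemma chiN x : chi (- x) * chi x = 1.
Proof. by rewrite -chiD addNr chi0. Qed.

Lemma chiXq x : chi x ^+ #|K| = 1.
Proof.
have hP : \prod_(y : K) chi y != 0.
  apply/prodf_neq0 => y _; apply/eqP => h.
  by move: (chiN y); rewrite h mulr0 => /eqP; rewrite eq_sym oner_eq0.
have := (reindex_inj (addIr x) : \prod_(y : K) chi y = \prod_(y : K) chi (y + x)).
under [in X in _ = X -> _]eq_bigr do rewrite chiD.
rewrite big_split /= prodr_const cardT -cardE => /eqP.
rewrite -{1}[\prod__ _]mulr1 => /eqP /mulfI -/(_ hP) <- //.
Qed.

Lemma norm_chi x : `|chi x| = 1.
Proof.
have hK : (0 < #|K|)%N by apply/card_gt0P; exists 0.
apply/eqP; rewrite -(@pexpr_eq1 _ _ #|K|) ?normr_ge0 //.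
by rewrite -normrX chiXq normr1.
Qed.

Lemma conj_chi x : (chi x)^* = chi (- x).
Proof.
have h := normCK (chi x); rewrite norm_chi expr1n in h.
have hn : chi x != 0 by rewrite -normr_eq0 norm_chi oner_eq0.
apply: (mulfI hn); rewrite -h mulrC chiN //.
Qed.

Lemma sum_chi_lin (V : finZmodType) (L : V -> K) :
  (forall a b, L (a + b) = L a + L b) -> (exists w, chi (L w) != 1) ->
  \sum_(m : V) chi (L m) = 0.
Proof.
move=> hL [w hw].
have := (reindex_inj (addIr w) : \sum_(m : V) chi (L m) = \sum_(m : V) chi (L (m + w))).
under [in X in _ = X -> _]eq_bigr do rewrite hL chiD.
rewrite -mulr_suml => /eqP; rewrite -subr_eq0 -{1}[\sum__ _]mulr1 -mulrBr mulf_eq0.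
rewrite subr_eq0.
by rewrite [1 == _]eq_sym (negbTE hw) orbF => /eqP.
Qed.


Lemma chi_nt : exists x0, chi x0 != 1. Proof. by case: hchi. Qed.

Lemma sumK_chi (a : K) : \sum_(x : K) chi (a * x) = (a == 0)%:R * #|K|%:R.
Proof.
have [->|ha] := eqVneq a 0.
  under eq_bigr do rewrite mul0r chi0.
  by rewrite sumr_const mul1r cardT -cardE.
rewrite mul0r; apply: sum_chi_lin; first by move=> x y; rewrite mulrDr.
have [x0 hx0] := chi_nt; exists (x0 / a).
by rewrite mulrC divfK.
Qed.

Variable d : nat.
Notation q := (#|K|%:R : algC).

Lemma dotvDr (v a b : 'rV[K]_d) : dotv v (a + b) = dotv v a + dotv v b.
Proof. by rewrite /dotv -big_split; apply: eq_bigr => j _; rewrite mxE mulrDr. Qed.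

Lemma dotvC (v a : 'rV[K]_d) : dotv v a = dotv a v.
Proof. by rewrite /dotv; apply: eq_bigr => j _; rewrite mulrC. Qed.

Lemma dot0v (a : 'rV[K]_d) : dotv 0 a = 0.
Proof. by rewrite /dotv big1 // => j _; rewrite mxE mul0r. Qed.

Lemma sumV_chi (v : 'rV[K]_d) :
  \sum_(m : 'rV[K]_d) chi (dotv v m) = (v == 0)%:R * q ^+ d.
Proof.
have [->|hv] := eqVneq v 0.
  under eq_bigr do rewrite dot0v chi0.
  by rewrite sumr_const mul1r cardT -cardE card_mx mul1n natrX.
rewrite mul0r; apply: sum_chi_lin; first by move=> x y; rewrite dotvDr.
have [i hi] : exists i, v 0 i != 0.
  apply/existsP; apply: contraNT hv; rewrite negb_exists => /forallP h.
  apply/eqP/rowP => j; rewrite !mxE; exact/eqP/negbNE/h.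
have [x0 hx0] := chi_nt; exists ((x0 / v 0 i) *: delta_mx 0 i).
rewrite /dotv (bigD1 i) //= big1 ?addr0; last first.
  by move=> j hj; rewrite !mxE (negbTE hj) andbF mulr0 mulr0.
by rewrite !mxE !eqxx mulr1 mulrC divfK.
Qed.


Lemma sum_pick (T : finType) (a : T) (f : T -> algC) :
  \sum_(u : T) ((u == a)%:R * f u) = f a.
Proof.
rewrite (bigD1 a) //= big1 ?addr0 ?eqxx ?mul1r // => u hu.
by rewrite (negbTE hu) mul0r.
Qed.

Lemma qnormD (a b : 'rV[K]_d) : qnorm (a + b) = qnorm a + 2 * dotv a b + qnorm b.
Proof.
rewrite /qnorm /dotv mulr_sumr -!big_split; apply: eq_bigr => j _; rewrite !mxE /=; ring.
Qed.

Lemma qnormZ k (a : 'rV[K]_d) : qnorm (k *: a) = k ^+ 2 * qnorm a.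
Proof.
rewrite /qnorm mulr_sumr; apply: eq_bigr => j _; rewrite !mxE /=; ring.
Qed.

Lemma dotvZl k (a b : 'rV[K]_d) : dotv (k *: a) b = k * dotv a b.
Proof.
rewrite /dotv mulr_sumr; apply: eq_bigr => j _; rewrite !mxE /=; ring.
Qed.

Lemma dotvv (a : 'rV[K]_d) : dotv a a = qnorm a.
Proof. by rewrite /dotv /qnorm; apply: eq_bigr => j _; rewrite expr2. Qed.

Lemma conj_sum_chi (T : finType) (f : T -> K) :
  (\sum_(m : T) chi (f m))^* = \sum_(m : T) chi (- f m).
Proof. by rewrite rmorph_sum; apply: eq_bigr => m _; exact: conj_chi. Qed.

Hypothesis h2 : (2 : K) != 0.

Lemma gauss_norm (c : K) : c != 0 ->
  (\sum_(m : 'rV[K]_d) chi (c * qnorm m)) *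
  (\sum_(m : 'rV[K]_d) chi (c * qnorm m))^* = q ^+ d.
Proof.
move=> hc; rewrite conj_sum_chi mulr_sumr.
transitivity (\sum_(m' : 'rV[K]_d) \sum_(u : 'rV[K]_d)
   chi (c * qnorm u) * chi (dotv ((2 * c) *: u) m')).
  apply: eq_bigr => m' _; rewrite mulr_suml.
  rewrite (reindex_inj (addIr m')) /=; apply: eq_bigr => u _.
  rewrite -!chiD; congr chi; rewrite qnormD dotvZl; ring.
rewrite exchange_big /=.
transitivity (\sum_(u : 'rV[K]_d) ((u == 0)%:R * (chi (c * qnorm u) * q ^+ d))).
  apply: eq_bigr => u _; rewrite -mulr_sumr sumV_chi scaler_eq0 mulf_eq0.
  by rewrite (negbTE h2) (negbTE hc) /=; ring.
by rewrite sum_pick /qnorm big1 ?mulr0 ?chi0 ?mul1r // => j _; rewrite mxE expr0n.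
Qed.


Lemma dotvDl (a b v : 'rV[K]_d) : dotv (a + b) v = dotv a v + dotv b v.
Proof. by rewrite dotvC dotvDr !(dotvC v). Qed.

Lemma complete_sq (c : K) (z : 'rV[K]_d) : c != 0 ->
  \sum_(m : 'rV[K]_d) chi (c * qnorm m + dotv m z) =
  chi (- (4 * c)^-1 * qnorm z) * \sum_(m : 'rV[K]_d) chi (c * qnorm m).
Proof.
move=> hc.
rewrite (reindex_inj (addIr (- (2 * c)^-1 *: z))) /=.
rewrite mulr_sumr; apply: eq_bigr => m _.
rewrite -chiD; congr chi.
rewrite qnormD qnormZ dotvDl !dotvZl dotvv [dotv m (_ *: _)]dotvC dotvZl (dotvC z).
have h4 : (4 : K) = 2 * 2 by rewrite -natrM.
by field; rewrite hc h2 h4 mulf_neq0.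
Qed.


Lemma conjS (T : finType) (P : pred T) (F : T -> algC) :
  (\sum_(i | P i) F i)^* = \sum_(i | P i) (F i)^*.
Proof. exact: rmorph_sum. Qed.
Lemma conjM (x y : algC) : (x * y)^* = x^* * y^*.
Proof. exact: rmorphM. Qed.

Lemma parseval (I : finType) (w : I -> algC) (N : I -> K) :
  \sum_(s : K) (\sum_i w i * chi (s * N i)) * (\sum_i w i * chi (s * N i))^*
  = q * \sum_(r : K) (\sum_(i | N i == r) w i) * (\sum_(i | N i == r) w i)^*.
Proof.
transitivity (q * \sum_i \sum_j w i * (w j)^* * (N i == N j)%:R).
  transitivity (\sum_s \sum_i \sum_j (w i * (w j)^*) * chi ((N i - N j) * s)).
    apply: eq_bigr => s _; rewrite conjS mulr_suml; apply: eq_bigr => i _.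
    rewrite mulr_sumr; apply: eq_bigr => j _.
    rewrite conjM conj_chi mulrBl chiD [N i * s]mulrC [N j * s]mulrC; ring.
  rewrite exchange_big mulr_sumr; apply: eq_bigr => i _.
  rewrite exchange_big mulr_sumr; apply: eq_bigr => j _.
  rewrite -mulr_sumr sumK_chi subr_eq0; ring.
congr (q * _); symmetry.
transitivity (\sum_r \sum_i \sum_j (r == N i)%:R * (w i * (w j)^* * (N j == r)%:R)).
  apply: eq_bigr => r _; rewrite conjS big_mkcond [X in _ * X]big_mkcond mulr_suml; apply: eq_bigr => i _.
  rewrite mulr_sumr; apply: eq_bigr => j _.
  by rewrite [r == _]eq_sym; case: eqP => _; case: eqP => _ /=;
    rewrite ?conjC0 ?mulr0 ?mul0r ?mulr1 ?mul1r.
rewrite exchange_big; apply: eq_bigr => i _.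
rewrite exchange_big; apply: eq_bigr => j _.
by rewrite sum_pick eq_sym.
Qed.


Lemma conjV (x : algC) : (x^-1)^* = (x^*)^-1.
Proof. exact: fmorphV. Qed.

Lemma dotvNr (v a : 'rV[K]_d) : dotv v (- a) = - dotv v a.
Proof. by rewrite /dotv -sumrN; apply: eq_bigr => j _; rewrite mxE mulrN. Qed.

Lemma q_neq0 : q != 0.
Proof. by rewrite pnatr_eq0 -lt0n; apply/card_gt0P; exists 0. Qed.

Lemma step3 (E F : {set 'rV[K]_d}) (c : K) : c != 0 ->
  (q ^+ d) ^+ 2 * \sum_(m : 'rV[K]_d) ((fhat chi E m)^* * fhat chi F m) * chi (c * qnorm m)
  = (\sum_(m : 'rV[K]_d) chi (c * qnorm m)) *
    \sum_(p : 'rV[K]_d * 'rV[K]_d) ((p.1 \in E) && (p.2 \in F))%:R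
         * chi (- (4 * c)^-1 * qnorm (p.1 - p.2)).
Proof.
move=> hc.
transitivity (\sum_(m : 'rV[K]_d) \sum_(x : 'rV[K]_d) \sum_(y : 'rV[K]_d)
   ((x \in E) && (y \in F))%:R * chi (c * qnorm m + dotv m (x - y))).
  rewrite mulr_sumr; apply: eq_bigr => m _.
  rewrite /fhat conjM conjV rmorphXn /= conjC_nat conjS.
  set X := \sum_x _; set Y := \sum_x _.
  have hq := q_neq0.
  have -> : (q ^+ d) ^+ 2 * ((q ^+ d)^-1 * X * ((q ^+ d)^-1 * Y) * chi (c * qnorm m))
     = X * Y * chi (c * qnorm m) by field; rewrite expf_neq0.
  rewrite /X /Y -mulrA mulr_suml; apply: eq_bigr => x _.
  rewrite mulr_suml mulr_sumr; apply: eq_bigr => y _.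
  rewrite conjM conjC_nat conj_chi opprK -mulnb natrM.
  rewrite dotvDr dotvNr !chiD; ring.
rewrite exchange_big /=.
under eq_bigr do rewrite exchange_big /=.
rewrite pair_bigA mulr_sumr; apply: eq_bigr => -[x y] _ /=.
rewrite -mulr_sumr complete_sq //; ring.
Qed.

End Chi.

Lemma conj_natX (n k : nat) : ((n%:R : algC) ^+ k)^* = n%:R ^+ k.
Proof. by rewrite -natrX conjC_nat. Qed.

Lemma sum_ind (T : finType) (A : {set T}) : \sum_(x : T) (x \in A)%:R = #|A|%:R :> algC.
Proof.
rewrite -sum1_card natr_sum [RHS]big_mkcond; apply: eq_bigr => x _.
by case: (x \in A).
Qed.

Lemma card_setR (T : finType) (P : pred T) :
  #|[set x | P x]|%:R = \sum_(x : T) (P x)%:R :> algC.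
Proof.
rewrite -sum1_card natr_sum big_mkcond; apply: eq_bigr => x _.
by rewrite inE; case: (P x).
Qed.

Theorem mainTheorem8 (K : finFieldType) (hchar : (2 \notin [pchar K])%N)
    (chi : K -> algC) (hchi : nontriv_add_char chi)
    (d : nat) (hd : (2 <= d)%N) (E F : {set 'rV[K]_d}) :
  \sum_(t : K) ((nu E F t)%:R ^+ 2 : algC)
    <= (#|E| ^ 2 * #|F| ^ 2)%:R / #|K|%:R
       + #|K|%:R ^+ (3 * d) *
         \sum_(r : K) `| \sum_(m : 'rV[K]_d | qnorm m == r)
                           (fhat chi E m)^* * fhat chi F m | ^+ 2.
Proof.
have h2 : (2 : K) != 0.
  apply/negP => /eqP h; move/negP: hchar; apply; rewrite inE /= h eqxx.
  done.
set q := (#|K|%:R : algC).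
have hq : q != 0 := q_neq0 K.
set iota := fun p : 'rV[K]_d * 'rV[K]_d => ((p.1 \in E) && (p.2 \in F))%:R : algC.
set Nn := fun p : 'rV[K]_d * 'rV[K]_d => qnorm (p.1 - p.2).
set T := fun s : K => \sum_(p : 'rV[K]_d * 'rV[K]_d) iota p * chi (s * Nn p).
set w := fun m : 'rV[K]_d => (fhat chi E m)^* * fhat chi F m.
set B := fun c : K => \sum_(m : 'rV[K]_d) w m * chi (c * qnorm m).
set A := fun r : K => \sum_(m : 'rV[K]_d | qnorm m == r) w m.
have hnu t : (nu E F t)%:R = \sum_(p | Nn p == t) iota p.
  rewrite /nu card_setR [RHS]big_mkcond; apply: eq_bigr => p _.
  by rewrite /iota /Nn; case: (qnorm _ == t); rewrite ?andbT ?andbF.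
have GP1 : \sum_s T s * (T s)^* = q * \sum_(t : K) ((nu E F t)%:R ^+ 2 : algC).
  rewrite /T (@parseval K chi hchi); congr (q * _); apply: eq_bigr => t _.
  by rewrite -hnu conjC_nat expr2.
have GP2 : \sum_c B c * (B c)^* = q * \sum_(r : K) A r * (A r)^*.
  by rewrite /B (@parseval K chi hchi).
have h4 : (4 : K) != 0.
  have -> : (4 : K) = 2 * 2 by rewrite -natrM.
  by rewrite mulf_neq0.
set f := fun c : K => - (4 * c)^-1.
have fK : involutive f.
  by move=> c; rewrite /f mulrN invrN opprK invfM invrK mulKf.
have fz c : (f c != 0) = (c != 0).
  by rewrite /f oppr_eq0 invr_eq0 mulf_eq0 (negbTE h4).
have hqd : q ^+ d != 0 by rewrite expf_neq0.
have h3 c : c != 0 -> T (f c) * (T (f c))^* = q ^+ (3 * d) * (B c * (B c)^*).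
  move=> hc.
  have e3 : (q ^+ d) ^+ 2 * B c = (\sum_(m : 'rV[K]_d) chi (c * qnorm m)) * T (f c)
    := @step3 K chi hchi d h2 E F c hc.
  have hg := @gauss_norm K chi hchi d h2 c hc.
  apply: (mulfI hqd); rewrite -[in LHS]hg.
  set G := \sum_(m : 'rV[K]_d) chi (c * qnorm m).
  transitivity ((G * T (f c)) * (G * T (f c))^*); first by rewrite conjM; ring.
  have e33 : q ^+ (3 * d) = (q ^+ d) ^+ 3 by rewrite -exprM mulnC.
  rewrite -e3 conjM e33 -exprM conj_natX exprM; ring.
have T0 : T 0 = #|E|%:R * #|F|%:R.
  rewrite /T -!sum_ind big_distrlr pair_bigA; apply: eq_bigr => -[x y] _ /=.
  by rewrite mul0r (chi0 _ _ hchi) mulr1 /iota /= -natrM mulnb.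
have hsplit : \sum_s T s * (T s)^* =
    T 0 * (T 0)^* + q ^+ (3 * d) * (\sum_c B c * (B c)^* - B 0 * (B 0)^*).
  rewrite (bigD1 0) //=; congr (_ + _).
  rewrite (reindex_inj (can_inj fK)) /=.
  rewrite (eq_bigl (fun c => c != 0)); last by move=> c; rewrite fz.
  rewrite (bigD1 0 (P := xpredT)) //= addrC addrK mulr_sumr.
  by apply: eq_bigr => c hc; rewrite h3.
have key : \sum_(t : K) ((nu E F t)%:R ^+ 2 : algC) =
   (#|E| ^ 2 * #|F| ^ 2)%:R / q + q ^+ (3 * d) * \sum_r A r * (A r)^*
   - q^-1 * q ^+ (3 * d) * (B 0 * (B 0)^*).
  apply: (mulfI hq); rewrite -GP1 hsplit GP2 T0 conjM conjC_nat conjC_nat.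
  by rewrite !natrM ?natrX; field; exact: hq.
under [in X in _ <= X]eq_bigr => r _ do rewrite normCK.
change (\sum_(t : K) ((nu E F t)%:R ^+ 2 : algC) <=
   (#|E| ^ 2 * #|F| ^ 2)%:R / q + q ^+ (3 * d) * \sum_r A r * (A r)^*).
rewrite key gerBl -normCK.
by rewrite /q; apply: mulr_ge0; [apply: mulr_ge0; [rewrite invr_ge0 ler0n | apply: exprn_ge0; rewrite ler0n] | apply: exprn_ge0; apply: normr_ge0].
Qed.
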